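(* Let $e\in\,]0,1[$ and define $U:[0,1]^2\to[0,1]$ by $$U(x,y)=\begin{cases}1 & \max(x,y)=1,\\ \max(x,y) & x,y\in\,]e,1[,\\ 0 & x,y\in[0,e[,\\ x & y=e,\\ y & x=e,\\ \min(x,y) & \text{otherwise.}\end{cases}$$ Then $U$ is a disjunctive uninorm with neutral element $e$, and for every $\alpha\in\,]0,1[$ with $\alpha\ne e$ the cut $U(\cdot,\alpha)$ is not a continuous function with range $[0,1]$. Consequently, for every continuous fuzzy negation $N$, the function $I(x,y)=U(N(x),y)$ has a unique representation as a $(U,N)$-implication with a continuous fuzzy negation: if $U'$ is a disjunctive uninorm with neutral element in $]0,1[$ and $N'$ is a continuous fuzzy negation with $U'(N'(x),y)=I(x,y)$ for all $x,y$, then $U'=U$ and $N'=N$.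
   Context: A fuzzy negation is a non-increasing map $N:[0,1]\to[0,1]$ with $N(0)=1$, $N(1)=0$. A uninorm is a map $U:[0,1]^2\to[0,1]$ that is commutative, associative, non-decreasing in each variable, and has a neutral element $e\in[0,1]$. A uninorm is disjunctive if $U(1,0)=1$. *)

(* Defs.v *)
(* concrete reals R. Functions on [0,1] are modelled as
   functions R -> R (-> R) whose properties are only required on [0,1]. *)
From Stdlib Require Import Reals Lra Bool.
Open Scope R_scope.
Local Open Scope bool_scope.

Definition unit_I (x : R) : Prop := 0 <= x <= 1.

Definition rlt (a b : R) : bool := if Rlt_dec a b then true else false.
Definition rle (a b : R) : bool := if Rle_dec a b then true else false.
Definition req (a b : R) : bool := if Req_EM_T a b then true else false.

Definition fuzzy_negation (N : R -> R) : Prop :=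
  (forall x, unit_I x -> unit_I (N x)) /\
  (forall x y, unit_I x -> unit_I y -> x <= y -> N y <= N x) /\
  N 0 = 1 /\ N 1 = 0.

Definition continuous_on_I (f : R -> R) : Prop :=
  forall x, unit_I x -> forall eps, 0 < eps ->
    exists delta, 0 < delta /\
      forall y, unit_I y -> Rabs (y - x) < delta -> Rabs (f y - f x) < eps.

Definition uninorm (U : R -> R -> R) (e : R) : Prop :=
  unit_I e /\
  (forall x y, unit_I x -> unit_I y -> unit_I (U x y)) /\
  (forall x y, unit_I x -> unit_I y -> U x y = U y x) /\
  (forall x y z, unit_I x -> unit_I y -> unit_I z -> U x (U y z) = U (U x y) z) /\
  (forall x1 x2 y, unit_I x1 -> unit_I x2 -> unit_I y -> x1 <= x2 -> U x1 y <= U x2 y) /\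
  (forall x y1 y2, unit_I x -> unit_I y1 -> unit_I y2 -> y1 <= y2 -> U x y1 <= U x y2) /\
  (forall x, unit_I x -> U e x = x /\ U x e = x).

Definition disjunctive_uninorm (U : R -> R -> R) (e : R) : Prop :=
  uninorm U e /\ U 1 0 = 1.

Definition Uex (e x y : R) : R :=
  if req (Rmax x y) 1 then 1
  else if rlt e x && rlt x 1 && rlt e y && rlt y 1 then Rmax x y
  else if rle 0 x && rlt x e && rle 0 y && rlt y e then 0
  else if req y e then x
  else if req x e then y
  else Rmin x y.

(* Main.v *)
Require Import Defs.
From Stdlib Require Import Reals.
From Stdlib Require Import Lra.
Open Scope R_scope.

Ltac no_dec t := match t with
  | context[Rle_dec _ _] => fail 1 | context[Rlt_dec _ _] => fail 1
  | context[Req_EM_T _ _] => fail 1 | _ => idtac end.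
Ltac dec1 := match goal with
 | |- context[Rle_dec ?a ?b] => no_dec a; no_dec b; destruct (Rle_dec a b)
 | |- context[Rlt_dec ?a ?b] => no_dec a; no_dec b; destruct (Rlt_dec a b)
 | |- context[Req_EM_T ?a ?b] => no_dec a; no_dec b; destruct (Req_EM_T a b)
 end.
Ltac brute := unfold Uex, req, rlt, rle, Rmax, Rmin;
  repeat (dec1; cbv beta iota delta [andb]; try (exfalso; lra)); try lra.

Lemma Uassoc e x y z : 0 < e < 1 -> unit_I x -> unit_I y -> unit_I z ->
  Uex e x (Uex e y z) = Uex e (Uex e x y) z.
Proof. unfold unit_I; intros. brute. Qed.

Lemma Uunit e x y : 0 < e < 1 -> unit_I x -> unit_I y -> unit_I (Uex e x y).
Proof. unfold unit_I; intros. brute. Qed.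

Lemma Ucomm e x y : 0 < e < 1 -> unit_I x -> unit_I y -> Uex e x y = Uex e y x.
Proof. unfold unit_I; intros. brute. Qed.

Lemma Umono e x1 x2 y : 0 < e < 1 -> unit_I x1 -> unit_I x2 -> unit_I y -> x1 <= x2 ->
  Uex e x1 y <= Uex e x2 y.
Proof. unfold unit_I; intros. brute. Qed.

Lemma Uneut e x : 0 < e < 1 -> unit_I x -> Uex e e x = x /\ Uex e x e = x.
Proof. unfold unit_I; intros. split; brute. Qed.

Lemma U10 e : 0 < e < 1 -> Uex e 1 0 = 1.
Proof. intros. brute. Qed.

Lemma Unot_e e a x : 0 < e < 1 -> 0 < a < 1 -> a <> e -> unit_I x -> Uex e x a <> e.
Proof. unfold unit_I; intros. brute. Qed.

Lemma Udisj e : 0 < e < 1 -> disjunctive_uninorm (Uex e) e.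
Proof.
  intros he. split; [|apply U10; auto].
  refine (conj _ (conj _ (conj _ (conj _ (conj _ (conj _ _)))))).
  - unfold unit_I; lra.
  - intros; apply Uunit; auto.
  - intros; apply Ucomm; auto.
  - intros; apply Uassoc; auto.
  - intros; apply Umono; auto.
  - intros. rewrite (Ucomm e x y1), (Ucomm e x y2); auto. apply Umono; auto.
  - intros; apply Uneut; auto.
Qed.

Definition clamp (x : R) := Rmax 0 (Rmin 1 x).

Lemma clamp_I x : unit_I (clamp x).
Proof. unfold clamp, unit_I, Rmax, Rmin. repeat dec1; lra. Qed.

Lemma clamp_lip x y : Rabs (clamp y - clamp x) <= Rabs (y - x).
Proof.
  unfold clamp, Rmax, Rmin. repeat dec1; unfold Rabs; repeat destruct Rcase_abs; lra.
Qed.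

Lemma clamp_id x : unit_I x -> clamp x = x.
Proof. unfold clamp, unit_I, Rmax, Rmin. intros; repeat dec1; lra. Qed.

Lemma neg_surj N : fuzzy_negation N -> continuous_on_I N ->
  forall z, unit_I z -> exists x, unit_I x /\ N x = z.
Proof.
  intros [HI [Hm [H0 H1]]] Hc z Hz.
  destruct (Req_EM_T z 1) as [->|n1]. { exists 0. split; auto. unfold unit_I; lra. }
  destruct (Req_EM_T z 0) as [->|n0]. { exists 1. split; auto. unfold unit_I; lra. }
  set (g := fun x => z - N (clamp x)).
  assert (Cg : continuity g).
  { intros x. unfold continuity_pt, continue_in, limit1_in, limit_in.
    intros eps Heps. destruct (Hc (clamp x) (clamp_I x) eps Heps) as [d [Hd Hd']].
    exists d. split; auto. intros y [_ Hy]. simpl in *. unfold R_dist in *.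
    unfold g. replace (z - N (clamp y) - (z - N (clamp x))) with (-(N (clamp y) - N (clamp x))) by ring.
    rewrite Rabs_Ropp. apply Hd'. apply clamp_I.
    eapply Rle_lt_trans. apply clamp_lip. auto. }
  unfold unit_I in Hz.
  assert (g0 : g 0 < 0). { unfold g. rewrite clamp_id by (unfold unit_I; lra). lra. }
  assert (g1 : 0 < g 1). { unfold g. rewrite clamp_id by (unfold unit_I; lra). lra. }
  destruct (IVT g 0 1 Cg ltac:(lra) g0 g1) as [x [Hx Hgx]].
  exists x. split. unfold unit_I; lra.
  unfold g in Hgx. rewrite clamp_id in Hgx by (unfold unit_I; lra). lra.
Qed.

Theorem mainTheorem6 (e : R) (he : 0 < e < 1) :
  disjunctive_uninorm (Uex e) e /\
  (forall alpha, 0 < alpha < 1 -> alpha <> e ->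
     ~ (continuous_on_I (fun x => Uex e x alpha) /\
        forall z, unit_I z -> exists x, unit_I x /\ Uex e x alpha = z)) /\
  (forall N : R -> R, fuzzy_negation N -> continuous_on_I N ->
     forall (U' : R -> R -> R) (e' : R) (N' : R -> R),
       disjunctive_uninorm U' e' -> 0 < e' < 1 ->
       fuzzy_negation N' -> continuous_on_I N' ->
       (forall x y, unit_I x -> unit_I y -> U' (N' x) y = Uex e (N x) y) ->
       (forall x y, unit_I x -> unit_I y -> U' x y = Uex e x y) /\
       (forall x, unit_I x -> N' x = N x)).
Proof.
  split; [apply Udisj; auto|]. split.
  - intros a Ha Hae [_ Hs].
    destruct (Hs e ltac:(unfold unit_I; lra)) as [x [Hx Hxe]].
    exact (Unot_e e a x he Ha Hae Hx Hxe).
  - intros N HN HNc U' e' N' HU' He' HN' HN'c Heq.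
    assert (HNI : forall x, unit_I x -> unit_I (N x)) by apply HN.
    assert (HN'I : forall x, unit_I x -> unit_I (N' x)) by apply HN'.
    destruct HU' as [[He'I [_ [_ [_ [_ [_ Hneu]]]]]] _].
    assert (HN'e : forall x, unit_I x -> N' x = Uex e (N x) e').
    { intros x Hx. rewrite <- Heq by auto. symmetry. apply Hneu. auto. }
    assert (Hee : e' = e).
    { destruct (Req_EM_T e' e) as [|n]; auto. exfalso.
      destruct (neg_surj N' HN' HN'c e ltac:(unfold unit_I; lra)) as [x [Hx Hxe]].
      rewrite HN'e in Hxe by auto.
      exact (Unot_e e e' (N x) he He' n (HNI x Hx) Hxe). }
    subst e'.
    assert (HNN : forall x, unit_I x -> N' x = N x).
    { intros x Hx. rewrite HN'e by auto. apply Uneut; auto. }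
    split; auto.
    intros x y Hx Hy. destruct (neg_surj N HN HNc x Hx) as [t [Ht <-]].
    rewrite <- (HNN t Ht) at 1. apply Heq; auto.
Qed.
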